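(* Let $f:X\to\mathcal G$ be a function and $x_0\in\operatorname{dom} f$. The following are equivalent: (a) $f(x_0)\in\operatorname{Min}f[X]$, i.e. for all $x\in X$, $f(x)\supseteq f(x_0)$ implies $f(x)=f(x_0)$; (b) for all $x\in X$ with $f(x)\ne f(x_0)$ there is $z^*\in C^-\setminus\{0\}$ with $\varphi_{f,z^*}(x_0)<\varphi_{f,z^*}(x)$; (c) for all $x\in X$ with $f(x)\ne f(x_0)$ there is $z^*\in C^-\setminus\{0\}$ with $\varphi_{f,z^*}(x)\neq-\infty$ and $\varphi_{f,z^*}(x_0)\ominus\varphi_{f,z^*}(x)<0$; (d) for all $x\in X$ with $f(x)\ne f(x_0)$ there is $z^*\in C^-\setminus\{0\}$ with $0<\varphi_{f,z^*}(x)\ominus\varphi_{f,z^*}(x_0)$; (e) for all $x\in X$ with $f(x)\neq f(x_0)$: $0\notin f(x)\ominus f(x_0)$.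
   Context: $X$ real linear space, $Z$ real locally convex Hausdorff space with dual $Z^*$, $C\subseteq Z$ closed convex cone, $0\in C$, $C^-=\{z^*:z^*(c)\le0\ \forall c\in C\}$, $C^-\setminus\{0\}\ne\emptyset$. $\mathcal G=\{A\subseteq Z:A=\operatorname{cl}\operatorname{co}(A+C)\}$; $A\ominus B=\{z\in Z:B+\{z\}\subseteq A\}$; $\operatorname{dom}f=\{x:f(x)\ne\emptyset\}$. On $\overline{\mathbb R}$: inf-addition $\dot+$ ($(-\infty)\dot+(+\infty)=+\infty$), $r\ominus s=\inf\{t\in\mathbb R:r\le s\dot+t\}$ ($\inf\emptyset=+\infty$). $\varphi_{f,z^*}(x)=\inf\{-z^*(z):z\in f(x)\}$ ($+\infty$ if $f(x)=\emptyset$). *)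

(* Defs.v *)
From HB Require Import structures.
From mathcomp Require Import all_boot all_order all_algebra.
From mathcomp Require Import all_classical all_reals all_analysis.
Set Implicit Arguments. Unset Strict Implicit. Unset Printing Implicit Defensive.
Import Order.TTheory GRing.Theory Num.Theory.
Import numFieldTopology.Exports numFieldNormedType.Exports.
Local Open Scope classical_set_scope.
Local Open Scope ring_scope.

Definition is_dual (R : realType) (Z : tvsType R) (zs : Z -> R) : Prop :=
  (forall (a : R) (x y : Z), zs (a *: x + y) = a * zs x + zs y) /\
  continuous zs.

Definition closed_convex_cone (R : realType) (Z : tvsType R) (C : set Z) : Prop :=
  [/\ closed C, convex_set (C : set (convex_lmodType Z)),
      (forall (t : R) c, 0 <= t -> C c -> C (t *: c)) & C 0].

Definition neg_dual_cone (R : realType) (Z : tvsType R) (C : set Z)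
  (zs : Z -> R) : Prop :=
  is_dual zs /\ (forall c, C c -> zs c <= 0).

Definition conv_hull (R : realType) (Z : tvsType R) (A : set Z) : set Z :=
  \bigcap_(B in [set B : set Z | convex_set (B : set (convex_lmodType Z)) /\ A `<=` B]) B.

Definition set_add (R : realType) (Z : tvsType R) (A B : set Z) : set Z :=
  [set a + b | a in A & b in B].

Definition inG (R : realType) (Z : tvsType R) (C : set Z) (A : set Z) : Prop :=
  A = closure (conv_hull (set_add A C)).

Definition set_minus (R : realType) (Z : tvsType R) (A B : set Z) : set Z :=
  [set z | set_add B [set z] `<=` A].

(* phi_{f,z*}(x) = inf {-z*(z) | z in f x}, +oo if f x is empty *)
Definition phi (R : realType) (X : Type) (Z : tvsType R) (f : X -> set Z)
  (zs : Z -> R) (x : X) : \bar R :=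
  ereal_inf [set ((- zs z)%:E)%E | z in f x].

(* r ⊖ s = inf {t in R | r <= s +. t} on the extended reals; since t is real,
   inf-addition s +. t coincides with the ordinary one. *)
Definition eminus (R : realType) (r s : \bar R) : \bar R :=
  ereal_inf [set (t%:E)%E | t in [set t : R | (r <= s + t%:E)%E]].

(* Main.v *)
Require Import Defs.
From HB Require Import structures.
From mathcomp Require Import all_boot all_order all_algebra.
From mathcomp Require Import all_classical all_reals all_analysis.
From mathcomp.algebra_tactics Require Import ring lra.
Import Order.TTheory GRing.Theory Num.Theory.
Import numFieldTopology.Exports numFieldNormedType.Exports.
Local Open Scope classical_set_scope.
Local Open Scope ring_scope.
Section Gauge.
Variables (R : realType) (Z : lmodType R).
Variables (E : set Z) (e : Z).
Hypothesis E0 : E 0.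
Hypothesis Econv : forall x y (t : R), 0 <= t -> t <= 1 -> E x -> E y ->
  E (t *: x + (1 - t) *: y).
Hypothesis Eabs : forall z, exists2 l : R, 0 < l & E (l^-1 *: z).
Hypothesis Ee : ~ E e.

Definition gset z := [set l : R | 0 < l /\ E (l^-1 *: z)].
Definition gauge z := inf (gset z).

Lemma gset_n0 z : gset z !=set0.
Proof. by have [l l0 El] := Eabs z; exists l. Qed.

Lemma gset_lb z : has_lbound (gset z).
Proof. by exists 0 => l [l0 _]; exact: ltW. Qed.

Lemma gauge_ge0 z : 0 <= gauge z.
Proof. by apply: lb_le_inf; [exact: gset_n0|move=> l [l0 _]; exact: ltW]. Qed.

Lemma gauge_le z l : 0 < l -> E (l^-1 *: z) -> gauge z <= l.
Proof. by move=> l0 El; apply: (ge_inf (gset_lb z)). Qed.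

Lemma gauge_E z : E z -> gauge z <= 1.
Proof. by move=> Ez; apply: gauge_le => //; rewrite invr1 scale1r. Qed.

Lemma gauge_homo t w : 0 < t -> t * gauge w <= gauge (t *: w).
Proof.
move=> t0; apply: lb_le_inf; first exact: gset_n0.
move=> l [l0 El]; rewrite -ler_pdivlMl // mulrC.
apply: gauge_le; first by rewrite divr_gt0.
by rewrite scalerA in El; rewrite invf_div mulrC.
Qed.

Lemma gauge_add z w : gauge (z + w) <= gauge z + gauge w.
Proof.
have H l m : gset z l -> gset w m -> gauge (z + w) <= l + m.
  move=> [l0 El] [m0 Em]; have lm0 : 0 < l + m by rewrite addr_gt0.
  apply: gauge_le => //.
  have -> : (l + m)^-1 *: (z + w) =
    (l / (l + m)) *: (l^-1 *: z) + (1 - l / (l + m)) *: (m^-1 *: w).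
    rewrite !scalerA scalerDr; congr (_ *: _ + _ *: _).
      by field; rewrite ?lt0r_neq0.
    by field; rewrite ?lt0r_neq0.
  apply: Econv => //; first by rewrite divr_ge0 // ltW.
  by rewrite ler_pdivrMr // mul1r lerDl ltW.
have H2 m : gset w m -> gauge (z + w) - m <= gauge z.
  move=> wm; apply: lb_le_inf; first exact: gset_n0.
  by move=> l zl; rewrite lerBlDr; exact: H.
rewrite -lerBlDl; apply: lb_le_inf; first exact: gset_n0.
by move=> m wm; rewrite lerBlDl -lerBlDr; exact: H2.
Qed.

Lemma gauge_e t : t <= gauge (t *: e).
Proof.
have [t0|t0] := leP t 0; first exact: le_trans (gauge_ge0 _).
apply: lb_le_inf; first exact: gset_n0.
move=> l [l0 El]; rewrite leNgt; apply/negP => lt.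
apply: Ee.
have -> : e = (l / t) *: (l^-1 *: (t *: e)) + (1 - l / t) *: 0.
  rewrite scaler0 addr0 !scalerA.
  have -> : l / t * l^-1 * t = 1 by field; rewrite ?lt0r_neq0.
  by rewrite scale1r.
apply: Econv => //; first by rewrite divr_ge0 // ltW.
by rewrite ler_pdivrMr // mul1r ltW.
Qed.
End Gauge.
Section HBext.
Variables (R : realType) (Z : lmodType R).
Variables (p : Z -> R) (e : Z).
Hypothesis p_add : forall z w, p (z + w) <= p z + p w.
Hypothesis p_homo : forall t w, 0 < t -> t * p w <= p (t *: w).
Hypothesis p_e : forall t, t <= p (t *: e).
Hypothesis e_n0 : e != 0.

Definition good (G : set (Z * R)) :=
  [/\ forall t, G (t *: e, t),
      forall z r r', G (z, r) -> G (z, r') -> r = r',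
      forall a z r w s, G (z, r) -> G (w, s) -> G (a *: z + w, a * r + s)
    & forall z r, G (z, r) -> r <= p z].

Definition G0 : set (Z * R) := [set zr | exists t, zr = (t *: e, t)].

Lemma good0 : good G0.
Proof.
split.
- by move=> t; exists t.
- move=> z r r' [t [-> ->]] [t' [ett' ->]].
  apply/eqP; rewrite -subr_eq0; apply/negP => /negP tt.
  move/eqP: e_n0; apply.
  have : (t - t') *: e = 0 by rewrite scalerBl ett' subrr.
  move=> /(congr1 (fun v => (t - t')^-1 *: v)).
  by rewrite scalerA mulVf // scale1r scaler0.
- move=> a z r w s [t [-> ->]] [t' [-> ->]]; exists (a * t + t').
  by rewrite scalerDl scalerA.
- by move=> z r [t [-> ->]].
Qed.

Lemma good_00 G : good G -> G (0, 0).
Proof. by case=> G0e _ _ _; have := G0e 0; rewrite scale0r. Qed.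

Lemma good_ext A y : good A -> (forall r, ~ A (y, r)) ->
  exists B, good B /\ A `<` B.
Proof.
move=> [Ae Af Al Ad] ny.
have A00 : A (0, 0) by apply: good_00.
have Ascale a z r : A (z, r) -> A (a *: z, a * r).
  by move=> Azr; have := Al a z r 0 0 Azr A00; rewrite !addr0.
pose L := [set x : R | exists u h, A (u, h) /\ x = h - p (u - y)].
have key u h v k : A (u, h) -> A (v, k) -> h - p (u - y) <= p (v + y) - k.
  move=> Auh Avk.
  have := Ad _ _ (Al 1 _ _ _ _ Auh Avk); rewrite !scale1r !mul1r => hk.
  have := p_add (u - y) (v + y).
  have -> : u - y + (v + y) = u + v by rewrite addrCA subrK addrC.
  move=> puv; lra.
have Ln0 : L !=set0 by exists (0 - p (0 - y)), 0, 0.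
have Lub : has_ubound L.
  by exists (p (0 + y) - 0) => _ [u [h [Auh ->]]]; exact: key.
pose c := sup L.
have c_ge u h : A (u, h) -> h - p (u - y) <= c.
  by move=> Auh; apply: ub_le_sup => //; exists u, h.
have c_le v k : A (v, k) -> c <= p (v + y) - k.
  move=> Avk; apply: ge_sup => // _ [u [h [Auh ->]]]; exact: key.
pose B := [set zr : Z * R | exists s g t, A (s, g) /\ zr = (s + t *: y, g + t * c)].
have AB : A `<=` B.
  by move=> [z r] Azr; exists z, r, 0; rewrite scale0r mul0r !addr0.
exists B; split; last first.
  split => // BA; have : B (y, c).
    by exists 0, 0, 1; split => //; rewrite scale1r mul1r !add0r.
  by move=> /BA; apply: ny.
split.
- by move=> t; apply: AB.
- move=> z r r' [s [g [t [Asg [-> ->]]]]] [s' [g' [t' [Asg' [eqs ->]]]]].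
  have [tt|ntt] := eqVneq t t'.
    move: eqs; rewrite -tt => /addIr ss; rewrite -ss in Asg'.
    congr (_ + _); exact: Af Asg Asg'.
  exfalso; apply: (ny ((t - t')^-1 * (g' - g))).
  have := Ascale (t - t')^-1 _ _ (Al (-1) _ _ _ _ Asg Asg').
  have -> : (t - t')^-1 *: (-1 *: s + s') = y.
    have -> : -1 *: s + s' = (t - t') *: y.
      rewrite scaleN1r scalerBl; apply: (addrI s).
      by rewrite addNKr addrA eqs addrK.
    by rewrite scalerA mulVf ?subr_eq0 // scale1r.
  by rewrite mulN1r [- g + _]addrC.
- move=> a z r w u [s [g [t [Asg [-> ->]]]]] [s' [g' [t' [Asg' [-> ->]]]]].
  exists (a *: s + s'), (a * g + g'), (a * t + t'); split; first exact: Al.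
  congr (_, _); first by rewrite scalerDr scalerA scalerDl !addrA; congr (_ + _);
    rewrite -!addrA; congr (_ + _); rewrite addrC.
  by rewrite mulrDr mulrA mulrDl !addrA; congr (_ + _);
    rewrite -!addrA; congr (_ + _); rewrite addrC.
- move=> z r [s [g [t [Asg [-> ->]]]]].
  have [t0|t0|->] := ltgtP t 0; last by rewrite scale0r mul0r !addr0; exact: Ad.
  +
    pose tau := - t; have tau0 : 0 < tau by rewrite oppr_gt0.
    have := c_ge _ _ (Ascale tau^-1 _ _ Asg) => hc.
    have := @p_homo tau (tau^-1 *: s - y) tau0.
    have -> : tau *: (tau^-1 *: s - y) = s + t *: y.
      by rewrite scalerBr scalerA divff ?gt_eqF // scale1r /tau scaleNr opprK.
    move=> hp.
    have : tau * (tau^-1 * g - p (tau^-1 *: s - y)) <= tau * c.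
      by rewrite ler_pM2l.
    rewrite mulrBr mulrA divff ?gt_eqF // mul1r /tau => hh.
    rewrite /tau in hp; nra.
  + have := c_le _ _ (Ascale t^-1 _ _ Asg) => hc.
    have := @p_homo t (t^-1 *: s + y) t0.
    have -> : t *: (t^-1 *: s + y) = s + t *: y.
      by rewrite scalerDr scalerA divff ?gt_eqF // scale1r.
    move=> hp.
    have : t * c <= t * (p (t^-1 *: s + y) - t^-1 * g).
      by rewrite ler_pM2l.
    rewrite mulrBr mulrA divff ?gt_eqF // mul1r => hh; lra.
Qed.

End HBext.
Section HBzorn.
Variables (R : realType) (Z : lmodType R).
Variables (p : Z -> R) (e : Z).
Hypothesis p_add : forall z w, p (z + w) <= p z + p w.
Hypothesis p_homo : forall t w, 0 < t -> t * p w <= p (t *: w).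
Hypothesis p_e : forall t, t <= p (t *: e).
Hypothesis e_n0 : e != 0.

Local Notation good := (@good R Z p e).

Lemma chain_good (F : set (set (Z * R))) :
  F `<=` (fun G => G = set0 \/ good G) -> total_on F subset ->
  (fun G => G = set0 \/ good G) (\bigcup_(X in F) X).
Proof.
move=> FP Ftot.
have FX X zr : F X -> X zr -> good X.
  by move=> FXX Xzr; case: (FP X FXX) => // X0; rewrite X0 in Xzr.
have two zr zr' : (\bigcup_(X in F) X) zr -> (\bigcup_(X in F) X) zr' ->
    exists X, [/\ F X, X zr & X zr'].
  move=> [X1 F1 X1z] [X2 F2 X2z]; case: (Ftot _ _ F1 F2) => [s12|s21].
    by exists X2; split => //; apply: s12.
  by exists X1; split => //; apply: s21.
rewrite /=; have [U0|/set0P [zr0 [X0 F0 X0z]]] := eqVneq (\bigcup_(X in F) X) set0.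
  by left.
right; have gX0 := FX _ _ F0 X0z; split.
- by move=> t; exists X0 => //; case: gX0.
- move=> z r r' U1 U2; have [X [FXX X1 X2]] := two _ _ U1 U2.
  by case: (FX _ _ FXX X1) => _ Hf _ _; exact: Hf X1 X2.
- move=> a z r w s U1 U2; have [X [FXX X1 X2]] := two _ _ U1 U2.
  exists X => //; by case: (FX _ _ FXX X1) => _ _ Hl _; exact: Hl X1 X2.
- move=> z r [X FXX X1]; by case: (FX _ _ FXX X1) => _ _ _ Hd; exact: Hd.
Qed.

Lemma hahn_banach : exists g : Z -> R,
  [/\ forall a x y, g (a *: x + y) = a * g x + g y, g e = 1 &
      forall z, g z <= p z].
Proof.
have [A [PA Amax]] := Zorn_bigcup chain_good.
have gA : good A.
  case: PA => // A0; exfalso; apply: (Amax (@G0 R Z e)); last by right; exact: (@good0 R Z p e p_e e_n0).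
  rewrite A0; split; first by [].
  by move=> /(_ (0 *: e, 0)) /(_ (ex_intro _ 0 erefl)).
have tot y : exists r, A (y, r).
  have [//|ny0] := pselect (exists r, A (y, r)).
  have ny : forall r, ~ A (y, r) by move=> r Ar; apply: ny0; exists r.
  exfalso.
  have [B [gB AB]] := @good_ext R Z p e p_add p_homo A y gA ny.
  by apply: (Amax B AB); right.
case: gA => Ae Af Al Ad.
pose g z := xget 0 [set r | A (z, r)].
have Ag z : A (z, g z) := @xgetPex _ 0 [set r | A (z, r)] (tot z).
exists g; split.
- move=> a x y; apply: (Af (a *: x + y)) => //; exact: Al.
- by apply: (Af e) => //; have := Ae 1; rewrite scale1r.
- by move=> z; exact: Ad.
Qed.
End HBzorn.
Section Sep.
Variables (R : realType) (Z : tvsType R).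

Lemma convexP (A : set Z) : convex_set (A : set (convex_lmodType Z)) ->
  forall x y (t : R), 0 <= t -> t <= 1 -> A x -> A y -> A (t *: x + (1 - t) *: y).
Proof.
move=> cA x y t t0 t1 Ax Ay.
have := cA x y (Itv01 t0 t1) (mem_set Ax) (mem_set Ay).
by rewrite inE.
Qed.

Lemma absorb (U : set Z) : nbhs 0 U -> forall z, exists2 s : R, 0 < s & U (s *: z).
Proof.
move=> U0 z; have /= := @scale_continuous R Z (0, z) U.
rewrite scale0r => /(_ U0)[] /= B [B1 B2] BU.
have [eps eps0 beps] := (nbhs_ballP _ _).1 B1.
exists (eps / 2); first by rewrite divr_gt0.
apply: (BU (eps / 2, z)); split => /=; last exact: nbhs_singleton.
apply: beps; rewrite /ball /= sub0r normrN gtr0_norm ?divr_gt0 //.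
by rewrite ltr_pdivrMr // ltr_pMr // ltr1n.
Qed.
End Sep.
Lemma comb_aux (R : realType) (Z : lmodType R) (t : R) (v k e v' k' : Z) :
  t *: (v - k + e) + (1 - t) *: (v' - k' + e) =
  (t *: v + (1 - t) *: v') - (t *: k + (1 - t) *: k') + e.
Proof.
rewrite !scalerDr !scalerN addrACA [X in X + _]addrACA -opprD -scalerDl subrKC.
by rewrite scale1r.
Qed.
Section Lin.
Variables (R : realType) (Z : lmodType R) (g : Z -> R).
Hypothesis gl : forall a x y, g (a *: x + y) = a * g x + g y.
Lemma lin0 : g 0 = 0.
Proof. by have := gl 1 0 0; rewrite addr0 mul1r scale1r => /eqP; rewrite -subr_eq subrr eq_sym => /eqP. Qed.
Lemma linD x y : g (x + y) = g x + g y.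
Proof. by have := gl 1 x y; rewrite scale1r mul1r. Qed.
Lemma linZ a x : g (a *: x) = a * g x.
Proof. by have := gl a x 0; rewrite addr0 lin0 addr0. Qed.
Lemma linN x : g (- x) = - g x.
Proof. by rewrite -scaleN1r linZ mulN1r. Qed.
Lemma linB x y : g (x - y) = g x - g y.
Proof. by rewrite linD linN. Qed.
End Lin.

Section Sep2.
Variables (R : realType) (Z : tvsType R).

Lemma separation (K : set Z) (z0 : Z) :
  convex_set (K : set (convex_lmodType Z)) -> K !=set0 -> ~ closure K z0 ->
  exists2 g : Z -> R, is_dual g & exists2 t, 0 < t & forall k, K k -> g z0 + t <= g k.
Proof.
move=> Kc [k0 Kk0] nK.
have [N [Nz0 KN]] : exists N, nbhs z0 N /\ forall k, K k -> ~ N k.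
  apply: contrapT => H; apply: nK => B Bz; apply: contrapT => HB; apply: H.
  by exists B; split => // k Kk Bk; apply: HB; exists k.
have [Bs Bconv [Bopen Bbasis]] := @locally_convex R Z.
have [V [BsV Vz0] VN] := Bbasis z0 N Nz0.
have Vc : convex_set (V : set (convex_lmodType Z)) by apply: Bconv; rewrite inE.
have Vn : nbhs z0 V by apply: open_nbhs_nbhs; split => //; exact: Bopen.
pose e := k0 - z0.
pose E := [set x : Z | exists v k, [/\ V v, K k & x = v - k + e]].
pose U' := [set w : Z | V (z0 + w)].
have U'n : nbhs 0 U'.
  have := @nbhsB R Z V z0 (- z0) Vn; rewrite addNr; apply: filterS.
  move=> _ [v Vv <-] /=; rewrite /U' /=.
  by have -> : z0 + (- z0 + v) = v :> Z by rewrite addNKr.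
have U'E : U' `<=` E.
  move=> w Vw; exists (z0 + w), k0; split => //.
  have -> : z0 + w - k0 + e = w :> Z by rewrite /e !addrA subrK [z0 + w]addrC addrK.
  by [].
have En : nbhs 0 E by apply: filterS U'n.
have E0 : E 0.
  apply: U'E; rewrite /U' /=.
  have -> : z0 + 0 = z0 :> Z by rewrite addr0.
  exact: nbhs_singleton.
have Econv : forall x y (t : R), 0 <= t -> t <= 1 -> E x -> E y ->
    E (t *: x + (1 - t) *: y).
  move=> x y t t0 t1 [v [k [Vv Kk ->]]] [v' [k' [Vv' Kk' ->]]].
  exists (t *: v + (1 - t) *: v'), (t *: k + (1 - t) *: k'); split.
  - exact: convexP.
  - exact: convexP.
  - exact: comb_aux.
have Ee : ~ E e.
  move=> [v [k [Vv Kk H]]].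
  have vk : v = k.
    apply/eqP; rewrite -subr_eq0; apply/eqP; apply: (addIr e).
    by rewrite add0r -H.
  by apply: (KN k Kk); apply: VN; rewrite -vk.
have e_n0 : e != 0 by apply/negP => /eqP e0; apply: Ee; rewrite e0.
have Eabs : forall z, exists2 l : R, 0 < l & E (l^-1 *: z).
  move=> z; have [s s0 Es] := @absorb R Z E En z.
  by exists s^-1; rewrite ?invr_gt0 // invrK.
pose p := @gauge R Z E.
have [g [gl ge gp]] := @hahn_banach R Z p e
  (@gauge_add R Z E Econv Eabs) (@gauge_homo R Z E Eabs)
  (@gauge_e R Z E e E0 Econv Eabs Ee) e_n0.
have gE z : E z -> g z <= 1.
  by move=> Ez; apply: le_trans (gp z) _; exact: gauge_E.
have gD : forall x y, g (x + y) = g x + g y := @linD R Z g gl.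
have gZ : forall a x, g (a *: x) = a * g x := @linZ R Z g gl.
have gB : forall x y, g (x - y) = g x - g y := @linB R Z g gl.
have gN : forall x, g (- x) = - g x := @linN R Z g gl.
exists g.
  split => //; move=> x; apply/cvgrPdist_le => eps eps0.
  pose W := E `&` [set w | E (- w)].
  have Wn : nbhs 0 W.
    apply: filterI => //; have := @nbhs0N R Z E En; apply: filterS.
    by move=> _ [u Eu <-] /=; rewrite opprK.
  have := @nbhsT R Z _ x (@nbhs0Z R Z W eps (lt0r_neq0 eps0) Wn).
  apply: filterS => _ [_ [w [Ew ENw] <-] <-] /=.
  rewrite gD gZ opprD addrA subrr add0r normrN normrM gtr0_norm //.
  rewrite -[X in _ <= X]mulr1 ler_pM2l // ler_norml gE // andbT.
  by rewrite lerNl -gN; exact: gE.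
have [s s0 Us] := @absorb R Z U' U'n e.
exists s => // k Kk.
have : E (z0 + s *: e - k + e).
  by exists (z0 + s *: e), k.
move=> /gE; rewrite gD gB gD gZ ge mulr1.
move=> h; lra.
Qed.
End Sep2.
Section Ereal.
Variable R : realType.
Local Open Scope ereal_scope.

Lemma b2c (r s : \bar R) : r < s -> s <> -oo /\ eminus r s < 0.
Proof.
move=> rs.
have H (t : R) : (t < 0)%R -> r <= s + t%:E -> eminus r s < 0.
  move=> t0 hr; apply: (@le_lt_trans _ _ t%:E); last by rewrite lte_fin.
  by apply: ereal_inf_lbound; exists t.
case: s rs H => [s||] //; last by case: r.
- case: r => [r||] // rs H; split => //.
    apply: (H (r - s)%R); first by rewrite lte_fin in rs; lra.
    by rewrite -EFinD lee_fin; lra.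
  by apply: (H (-1)%R); [lra|exact: leNye].
- move=> rs H; split => //; apply: (H (-1)%R); first by lra.
  by rewrite leey.
Qed.

Lemma b2d (r s : \bar R) : r < s -> 0 < eminus s r.
Proof.
move=> rs.
have H (m : R) : (0 < m)%R -> (forall t : R, s <= r + t%:E -> (m <= t)%R) ->
    0 < eminus s r.
  move=> m0 hm; apply: (@lt_le_trans _ _ m%:E); first by rewrite lte_fin.
  by apply: le_ereal_inf_tmp => _ [t ht <-]; rewrite lee_fin; apply: hm.
case: r rs H => [r||] //.
- case: s => [s||] // rs H.
    apply: (H (s - r)%R); first by rewrite lte_fin in rs; lra.
    by move=> t; rewrite -EFinD lee_fin; lra.
  by apply: (H 1%R) => // t; rewrite -EFinD leye_eq.
- by case: s.
- move=> rs H; apply: (H 1%R) => // t; rewrite addNye leeNy_eq => /eqP s0.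
  by move: rs; rewrite s0.
Qed.

Lemma c2a (r s : \bar R) : r <> +oo -> s <= r -> s <> -oo -> ~ eminus r s < 0.
Proof.
move=> rny sr sny /ereal_inf_lt [_ [t ht <-]]; rewrite lte_fin => t0.
move: ht rny sr sny; case: s => [s||] //; case: r => [r||] //.
move=> /=; rewrite -EFinD !lee_fin => h1 _ h2 _; lra.
Qed.

Lemma d2a (r s : \bar R) : s <= r -> ~ 0 < eminus s r.
Proof.
move=> sr; apply/negP; rewrite -leNgt.
by apply: ereal_inf_lbound; exists 0%R => //=; rewrite adde0.
Qed.
End Ereal.
Lemma conv_hull_sub (R : realType) (Z : tvsType R) (A : set Z) : A `<=` conv_hull A.
Proof. by move=> x Ax B [_ AB]; exact: AB. Qed.

Lemma conv_hull_convex (R : realType) (Z : tvsType R) (A : set Z) :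
  convex_set (conv_hull A : set (convex_lmodType Z)).
Proof.
move=> x y l /set_mem hx /set_mem hy; apply/mem_set => B [cB AB].
have := cB x y l (mem_set (hx B (conj cB AB))) (mem_set (hy B (conj cB AB))).
by rewrite inE.
Qed.

Section PhiLemmas.
Variables (R : realType) (X : Type) (Z : tvsType R) (f : X -> set Z).
Local Open Scope ereal_scope.

Lemma phi_le zs x z : f x z -> phi f zs x <= (- zs z)%:E.
Proof. by move=> fz; apply: ereal_inf_lbound; exists z. Qed.

Lemma phi_ge zs x m : (forall z, f x z -> m <= (- zs z)%:E) -> m <= phi f zs x.
Proof. by move=> H; apply: le_ereal_inf_tmp => _ [z fz <-]; exact: H. Qed.

Lemma phi_mono zs x y : f x `<=` f y -> phi f zs y <= phi f zs x.
Proof. by move=> xy; apply: ereal_inf_le_tmp => _ [z fz <-]; exists z => //; exact: xy. Qed.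

Lemma phi_empty zs x : f x = set0 -> phi f zs x = +oo.
Proof. by move=> fx0; rewrite /phi fx0 image_set0 ereal_inf0. Qed.
End PhiLemmas.
Arguments phi_le {R X Z f} zs {x z}.
Arguments phi_ge {R X Z f} zs {x m}.
Arguments phi_mono {R X Z f} zs {x y}.
Arguments phi_empty {R X Z f} zs {x}.
Arguments separation {R Z K z0}.
Arguments conv_hull_convex {R Z A}.
Arguments b2c {R r s}.
Arguments b2d {R r s}.
Arguments c2a {R r s}.
Arguments d2a {R r s}.

Theorem mainTheorem19 (R : realType) (X : lmodType R) (Z : tvsType R)
  (hZ : hausdorff_space Z) (C : set Z) (hC : closed_convex_cone C)
  (hCm : exists zs : Z -> R, neg_dual_cone C zs /\ zs <> (fun _ => 0))
  (f : X -> set Z) (hf : forall x, inG C (f x))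
  (x0 : X) (hx0 : f x0 <> set0) :
  let Cm := fun zs : Z -> R => neg_dual_cone C zs /\ zs <> (fun _ => 0) in
  let a := forall x : X, f x0 `<=` f x -> f x = f x0 in
  let b := forall x : X, f x <> f x0 ->
             exists2 zs, Cm zs & (phi f zs x0 < phi f zs x)%E in
  let c := forall x : X, f x <> f x0 ->
             exists2 zs, Cm zs &
               (phi f zs x <> -oo)%E /\ (eminus (phi f zs x0) (phi f zs x) < 0)%E in
  let d := forall x : X, f x <> f x0 ->
             exists2 zs, Cm zs & (0 < eminus (phi f zs x) (phi f zs x0))%E in
  let e := forall x : X, f x <> f x0 -> ~ set_minus (f x) (f x0) 0 in
  [/\ a <-> b, a <-> c, a <-> d & a <-> e].
Proof.
move=> Cm a b c d e.
have [y0 fy0] : exists y, f x0 y.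
  by apply: contrapT => H; apply: hx0; apply/seteqP; split => // y fy; apply: H; exists y.
have phix0 zs : (phi f zs x0 < +oo)%E.
  by apply: (le_lt_trans (phi_le zs fy0)); rewrite ltey.
have ab : a -> b.
  move=> ha x nx.
  have [z0 [fz0 nfz0]] : exists z0, f x0 z0 /\ ~ f x z0.
    apply: contrapT => H; apply: nx; apply: ha => z fz.
    by apply: contrapT => nz; apply: H; exists z.
  have [fxe|fxn] := pselect (f x = set0).
    have [zs Czs] := hCm; exists zs => //.
    by rewrite (phi_empty _ fxe); apply: (le_lt_trans (phi_le zs fz0)); rewrite ltey.
  have [a0 fa0] : exists a0, f x a0.
    by apply: contrapT => H; apply: fxn; apply/seteqP; split => // y fy; apply: H; exists y.
  case: hC => _ _ Ccone C0.
  pose K := conv_hull (set_add (f x) C).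
  have fxK : f x `<=` K.
    move=> z fz; apply: conv_hull_sub; exists z => //; exists 0 => //; exact: addr0.
  have nK : ~ closure K z0 by rewrite /K -(hf x).
  have [g [gl gc] [t t0 gt]] := separation conv_hull_convex (ex_intro _ a0 (fxK _ fa0)) nK.
  have gD : forall x y, g (x + y) = g x + g y := @linD R Z g gl.
  have gZ : forall a x, g (a *: x) = a * g x := @linZ R Z g gl.
  pose zs := fun z => - g z.
  exists zs.
    split; last first.
      move=> /(congr1 (fun h => h z0 - h a0)) /=; rewrite subrr /zs opprK.
      have := gt _ (fxK _ fa0); lra.
    split.
      split; first by move=> a' x' y'; rewrite /zs gl opprD mulrN.
      by move=> z; apply: cvgN; exact: gc.
    move=> cc Ccc; rewrite /zs oppr_le0; rewrite leNgt; apply/negP => gc0.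
    have hK := gt _ (fxK _ fa0).
    pose lam := (g a0 - g z0) / (- g cc).
    have lam0 : 0 <= lam by rewrite /lam divr_ge0 // ?oppr_ge0 ?ltW //; lra.
    have : K (a0 + lam *: cc).
      by apply: conv_hull_sub; exists a0 => //; exists (lam *: cc) => //; exact: Ccone.
    move=> /gt; rewrite gD gZ.
    have -> : lam * g cc = g z0 - g a0.
      by rewrite /lam; field; rewrite ?oppr_eq0 ltr0_neq0.
    lra.
  apply: (@le_lt_trans _ _ (g z0)%:E).
    by have := phi_le zs fz0; rewrite /zs opprK.
  apply: (@lt_le_trans _ _ (g z0 + t)%:E); first by rewrite lte_fin; lra.
  by apply: phi_ge => z fz; rewrite /zs opprK lee_fin; apply: gt; exact: fxK.
have bc : b -> c.
  move=> hb x nx; have [zs Czs lt] := hb x nx; exists zs => //; exact: b2c.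
have bd : b -> d.
  move=> hb x nx; have [zs Czs lt] := hb x nx; exists zs => //; exact: b2d.
have ca : c -> a.
  move=> hc x sx; apply: contrapT => nx; have [zs Czs [h1 h2]] := hc x nx.
  apply: (c2a _ _ h1 h2).
    by apply/eqP; rewrite -ltey; exact: phix0.
  exact: phi_mono.
have da : d -> a.
  move=> hd x sx; apply: contrapT => nx; have [zs Czs h] := hd x nx.
  by apply: (d2a _ h); exact: phi_mono.
have ae : a <-> e.
  split.
    move=> ha x nx hs; apply: nx; apply: ha => z fz.
    by apply: hs; exists z => //; exists 0 => //; rewrite addr0.
  move=> he x sx; apply: contrapT => nx; apply: (he x nx).
  by move=> _ [z fz [_ -> <-]]; rewrite addr0; exact: sx.
split => //.
- by split; [exact: ab| move=> hb; apply: ca; exact: bc].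
- by split; [move=> ha; apply: bc; exact: ab|exact: ca].
- by split; [move=> ha; apply: bd; exact: ab|exact: da].
Qed.
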